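(* Let $\langle X,\tau\rangle$ be a topological space. (a) If $Y\subseteq X$ and the subspace $\langle Y,\tau\restriction Y\rangle$ has a Noetherian base, then $Y$ has a Noetherian outer base in $X$. (b) Every point $p\in X$ has a Noetherian neighbourhood base (i.e. a family of open sets containing $p$, forming a neighbourhood base at $p$, with no infinite strictly $\subseteq$-increasing sequence). (c) If $Y,Z\subseteq X$ both have Noetherian outer bases in $X$, then $Y\cup Z$ also has a Noetherian outer base in $X$.
   Context: A family $\mathcal G$ of sets is Noetherian if $\langle\mathcal G,\subseteq\rangle$ contains no infinite strictly increasing sequence; a Noetherian base is a base which is Noetherian. For $Y\subseteq X$, a family $\mathcal B\subseteq\tau$ is an outer base of $Y$ in $X$ if for every $p\in Y$ the family $\{G\in\mathcal B: p\in G\}$ is a neighbourhood base of $p$ in $X$. A Noetherian outer base is an outer base which is Noetherian. *)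

(* Defs.v *)
From HB Require Import structures.
From mathcomp Require Import all_boot all_order.
From mathcomp Require Import boolp classical_sets topology.
Set Implicit Arguments. Unset Strict Implicit. Unset Printing Implicit Defensive.
Local Open Scope classical_set_scope.

Definition noetherian {T : Type} (G : set (set T)) : Prop :=
  ~ exists f : nat -> set T, (forall n, G (f n)) /\ (forall n, f n `<` f n.+1).

Definition rel_open {X : topologicalType} (Y : set X) (V : set X) : Prop :=
  exists U : set X, open U /\ V = U `&` Y.

Definition subspace_base {X : topologicalType} (Y : set X) (B : set (set X)) : Prop :=
  (forall G, B G -> rel_open Y G) /\
  (forall V, rel_open Y V -> V = \bigcup_(G in [set G | B G /\ G `<=` V]) G).

Definition nbhd_base {X : topologicalType} (p : X) (B : set (set X)) : Prop :=
  (forall G, B G -> open G /\ G p) /\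
  (forall U, nbhs p U -> exists2 G, B G & G `<=` U).

Definition outer_base {X : topologicalType} (Y : set X) (B : set (set X)) : Prop :=
  (forall G, B G -> open G) /\
  (forall p, Y p -> nbhd_base p [set G | B G /\ G p]).

(* Main.v *)
Require Import Defs.
From HB Require Import structures.
From mathcomp Require Import all_boot all_order.
From mathcomp Require Import boolp classical_sets topology.
Local Open Scope classical_set_scope.

Section Aux.
Context {T : Type}.

Lemma chain_lt (f : nat -> set T) : (forall n, f n `<` f n.+1) ->
  forall n m, (n < m)%N -> f n `<` f m.
Proof.
move=> hf n m; elim: m => // m IH.
rewrite ltnS leq_eqVlt => /orP[/eqP->|/IH h]; first exact: hf.
split; first exact: subset_trans (properW h) (properW (hf m)).
move=> sub; case: h => _; apply.
exact: subset_trans (properW (hf m)) sub.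
Qed.

Lemma noeth_sub (A B : set (set T)) : A `<=` B -> noetherian B -> noetherian A.
Proof. by move=> AB nB [f [fA fc]]; apply: nB; exists f; split=> // n; apply: AB. Qed.

Lemma noeth_union (A B : set (set T)) : noetherian A -> noetherian B ->
  noetherian (A `|` B).
Proof.
move=> nA nB [f [fU fc]].
have [inf|fin] := pselect (forall N, exists n, (N <= n)%N /\ A (f n)).
  have [h hh] := choice inf.
  pose s := fix s k := if k is k'.+1 then h (s k').+1 else h 0.
  apply: nA; exists (fun k => f (s k)); split.
    by case=> [|k] /=; apply hh.
  move=> k; apply: chain_lt => //=.
  by have [+ _] := hh (s k).+1.
move/existsNP: fin => [N /forallNP hN].
apply: nB; exists (fun n => f (N + n)); split; last by move=> n; rewrite addnS.
move=> n; case: (fU (N + n)) => // hA; exfalso; apply: (hN (N + n)).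
by split=> //; rewrite leq_addr.
Qed.

Lemma noeth_stable (B : set (set T)) (t : nat -> set T) : noetherian B ->
  (forall n, B (t n)) -> (forall n, t n `<=` t n.+1) ->
  exists N, forall n, (N <= n)%N -> t n = t N.
Proof.
move=> nB tB tm.
have mono n m : (n <= m)%N -> t n `<=` t m.
  elim: m => [|m IH]; first by rewrite leqn0 => /eqP->.
  rewrite leq_eqVlt => /orP[/eqP->//|]; rewrite ltnS => /IH h.
  exact: subset_trans h (tm m).
have [//|hN] := pselect (exists N, forall n, (N <= n)%N -> t n = t N).
exfalso; apply: nB.
have hh : forall N, exists n, (N <= n)%N /\ t n <> t N.
  move=> N; have [//|H] := pselect (exists n, (N <= n)%N /\ t n <> t N).
  exfalso; apply: hN; exists N => n Nn.
  have [//|ne] := pselect (t n = t N); by exfalso; apply: H; exists n.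
have [h hh'] := choice hh.
pose s := fix s k := if k is k'.+1 then h (s k') else 0.
exists (fun k => t (s k)); split => // k /=.
have [le ne] := hh' (s k); split; first exact: mono.
by move=> sub; apply: ne; apply/seteqP; split=> //; apply: mono.
Qed.

End Aux.

Section ZornPart.
Context {X : topologicalType}.

Definition endext (A A' : set (set X)) :=
  A `<=` A' /\ forall G H, A' G -> ~ A G -> A H -> ~ (H `<` G).

Definition goodf (S O : set X) (A : set (set X)) :=
  (forall W, A W -> open W /\ S `<=` W /\ W `<=` O) /\ noetherian A.

Lemma cofinal_noeth (S O : set X) : open O -> S `<=` O ->
  exists C, goodf S O C /\
    (forall U, open U -> S `<=` U -> exists2 W, C W & W `<=` U).
Proof.
move=> oO SO.
pose T := {A : set (set X) | goodf S O A}.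
pose R (a b : T) := `[< endext (proj1_sig a) (proj1_sig b) >].
have [||||M Mmax] := @Zorn T R.
- by move=> [A gA]; apply/asboolP; split=> // G H AG nAG.
- move=> [A gA] [B gB] [C gC] /asboolP [AB hAB] /asboolP [BC hBC].
  apply/asboolP; split=> /=; first exact: subset_trans AB BC.
  move=> G H CG nAG AH; have [BG|nBG] := pselect (B G).
    exact: hAB.
  by apply: hBC => //; apply: AB.
- move=> [A gA] [B gB] /asboolP [AB _] /asboolP [BA _].
  by apply: eq_exist; apply/seteqP; split.
- move=> F Ftot.
  pose U := [set W | exists a : T, F a /\ proj1_sig a W].
  have gU : goodf S O U.
    split.
      by move=> W [[a [ga _]] [_ /= aW]]; apply: ga.
    move=> [f [fU fc]].
    case: (fU 0) => a0 [Fa0 a0f0].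
    have all0 n : proj1_sig a0 (f n).
      case: n => [//|n]; case: (fU n.+1) => an [Fan anf].
      case: (Ftot _ _ Fa0 Fan) => /asboolP [sub hsub].
        have [//|nin] := pselect (proj1_sig a0 (f n.+1)).
        by exfalso; apply: (hsub _ _ anf nin a0f0); apply: chain_lt.
      exact: sub.
    case: a0 Fa0 a0f0 all0 => A [_ nA] /= _ _ all0.
    by apply: nA; exists f.
  exists (exist _ U gU) => a Fa; apply/asboolP; split.
    by move=> W aW; exists a.
  move=> G H [b [Fb bG]] naG aH HG.
  case: (Ftot _ _ Fa Fb) => /asboolP [sub hsub].
    exact: hsub bG naG aH HG.
  by apply: naG; apply: sub.
case: M Mmax => M gM Mmax.
exists M; split => // U oU SU.
have [//|nW] := pselect (exists2 W, M W & W `<=` U).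
exfalso.
pose V := U `&` O.
have oV : open V by apply: openI.
have VU : V `<=` U by move=> x [].
have noM : forall W, M W -> ~ W `<=` V.
  by move=> W MW WV; apply: nW; exists W => //; apply: subset_trans WV VU.
pose M' := M `|` [set V].
have gM' : goodf S O M'.
  split.
    move=> W [/(proj1 gM) //|->]; split=> //; split; last by move=> x [].
    by move=> x Sx; split; [apply: SU|apply: SO].
  move=> [f [fM fc]]; apply: (proj2 gM).
  exists (fun n => f n.+1); split => // n.
  case: (fM n.+1) => // eV; exfalso.
  have lt : f 0 `<` f n.+1 by apply: chain_lt.
  case: (fM 0) => [M0|e0].
    by apply: (noM _ M0); rewrite -eV; apply: properW.
  by move: lt; rewrite e0 eV; apply: properxx.
have := Mmax (exist _ M' gM').
have RMM' : R (exist _ M gM) (exist _ M' gM').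
  apply/asboolP; split=> /=; first by move=> W MW; left.
  move=> G H [//|->] _ MH HV; apply: (noM _ MH); exact: properW.
move=> /(_ RMM') [eM].
have MV : M V by rewrite -eM; right.
by apply: (noM _ MV).
Qed.

End ZornPart.

Theorem lemma4 (X : topologicalType) :
  (forall Y : set X,
      (exists B : set (set X), subspace_base Y B /\ noetherian B) ->
      exists B : set (set X), outer_base Y B /\ noetherian B) /\
  (forall p : X, exists B : set (set X), nbhd_base p B /\ noetherian B) /\
  (forall Y Z : set X,
      (exists B : set (set X), outer_base Y B /\ noetherian B) ->
      (exists B : set (set X), outer_base Z B /\ noetherian B) ->
      exists B : set (set X), outer_base (Y `|` Z) B /\ noetherian B).
Proof.
split; [|split].
- move=> Y [B [[Bro Bun] nB]].
  have hO : forall G, exists O : set X, B G -> open O /\ G = O `&` Y.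
    move=> G; have [BG|nBG] := pselect (B G).
      by have [O [oO ->]] := Bro G BG; exists O.
    by exists setT.
  have [O hO'] := choice hO.
  have hC : forall G, exists C : set (set X), B G -> goodf G (O G) C /\
      (forall U, open U -> G `<=` U -> exists2 W, C W & W `<=` U).
    move=> G; have [BG|nBG] := pselect (B G); last by exists set0.
    have [oO eG] := hO' G BG.
    have GO : G `<=` O G by rewrite {1}eG => x [].
    have [C HC] := @cofinal_noeth X G (O G) oO GO.
    by exists C.
  have [C hC'] := choice hC.
  pose CC := [set W | exists G, B G /\ C G W].
  have trace W G : B G -> C G W -> W `&` Y = G.
    move=> BG CW; have [[gC _] _] := hC' G BG; have [_ eG] := hO' G BG.
    have [_ [GW WO]] := gC W CW.
    apply/seteqP; split.
      by move=> x [Wx Yx]; rewrite eG; split=> //; apply: WO.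
    by move=> x Gx; split; [apply: GW|move: Gx; rewrite eG => -[]].
  exists CC; split.
    split.
      by move=> W [G [BG CW]]; have [[gC _] _] := hC' G BG; case: (gC W CW).
    move=> p Yp; split.
      by move=> W [[G [BG CW]] Wp]; have [[gC _] _] := hC' G BG; case: (gC W CW).
    move=> U nU.
    have oV : open U° := open_interior U.
    have Vp : U° p by apply: nbhs_singleton; apply: nbhs_interior.
    have : (U° `&` Y) p by [].
    rewrite (Bun (U° `&` Y)); last by exists U°.
    move=> [G [BG GV] Gp].
    have [[gC _] cof] := hC' G BG.
    have [W CW WV] := cof U° oV (fun x Gx => proj1 (GV x Gx)).
    exists W.
      split; first by exists G.
      by have [_ [GW _]] := gC W CW; apply: GW.
    exact: subset_trans WV (@interior_subset _ U).
  move=> [f [fC fc]].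
  pose t n := f n `&` Y.
  have tB n : B (t n).
    by have [G [BG CG]] := fC n; rewrite /t (trace _ _ BG CG).
  have tm n : t n `<=` t n.+1.
    by move=> x [fx yx]; split=> //; apply: (proj1 (fc n)).
  have [N hN] := @noeth_stable _ B t nB tB tm.
  have [[_ nC] _] := hC' (t N) (tB N).
  apply: nC; exists (fun n => f (N + n)); split; last by move=> n; rewrite addnS.
  move=> n; have [G [BG CG]] := fC (N + n).
  have eG : G = t N by rewrite -(hN (N + n)) ?leq_addr // /t (trace _ _ BG CG).
  by rewrite -eG.
- move=> p.
  have [C [[gC nC] cof]] := @cofinal_noeth X [set p] setT openT (fun _ _ => I).
  exists C; split => //; split.
    by move=> G CG; have [oG [pG _]] := gC G CG; split => //; apply: pG.
  move=> U nU.
  have [W CW WU] := cof U° (open_interior U)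
    (fun x (e : x = p) => ltac:(rewrite e; apply: nbhs_singleton; exact: nbhs_interior)).
  exists W => //; exact: subset_trans WU (@interior_subset _ U).
- move=> Y Z [B1 [[o1 h1] n1]] [B2 [[o2 h2] n2]].
  exists (B1 `|` B2); split; last exact: noeth_union.
  split; first by move=> G [/o1|/o2].
  move=> p [Yp|Zp]; split.
  + by move=> G [[/o1|/o2] Gp].
  + move=> U nU; have [G [B1G Gp] GU] := (h1 p Yp).2 U nU.
    by exists G => //; split => //; left.
  + by move=> G [[/o1|/o2] Gp].
  + move=> U nU; have [G [B2G Gp] GU] := (h2 p Zp).2 U nU.
    by exists G => //; split => //; right.
Qed.
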